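(* Let $(V,v)$ be a pair of upper and lower probabilities on $(\Omega,\mathcal{F})$ and $\theta:\Omega\to\Omega$ a measurable map preserving $V$. (i) $\theta$ is ergodic with respect to $V$ if and only if for every $\theta$-invariant set $B$, $V(B)=0$ or $V(B^c)=0$. (ii) If $\theta$ is ergodic with respect to $V$, then $\theta$ is ergodic with respect to $v$.
   Context: For a nonempty set $\mathcal{P}$ of finitely additive probabilities on $\mathcal{F}$, $V(A)=\sup_{P\in\mathcal{P}}P(A)$, $v(A)=\inf_{P\in\mathcal{P}}P(A)$. $\theta$ preserves a capacity $\mu$ if $\mu(\theta^{-1}A)=\mu(A)$ for all $A\in\mathcal{F}$ (note $\theta$ preserves $V$ iff it preserves $v$). A set $B$ is $\theta$-invariant if $\theta^{-1}B=B$. For a capacity $\mu$ preserved by $\theta$, $\theta$ is ergodic with respect to $\mu$ if for every $\theta$-invariant $B$: $\mu(B)\in\{0,1\}$, and $\mu(B)=0$ or $\mu(B^c)=0$. *)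

(* Defs.v *)
From HB Require Import structures.
From mathcomp Require Import all_boot all_order all_algebra.
From mathcomp Require Import all_classical all_reals all_analysis.
Set Implicit Arguments. Unset Strict Implicit. Unset Printing Implicit Defensive.
Import Order.TTheory GRing.Theory Num.Theory.
Local Open Scope classical_set_scope.
Local Open Scope ring_scope.

(* A finitely additive probability on the sigma-algebra of T (values on
   non-measurable sets are irrelevant). *)
Definition fa_prob d (T : measurableType d) (R : realType) (P : set T -> R) : Prop :=
  P setT = 1 /\
  (forall A, measurable A -> 0 <= P A) /\
  (forall A B, measurable A -> measurable B -> A `&` B = set0 ->
     P (A `|` B) = P A + P B).

Definition upper_prob d (T : measurableType d) (R : realType)
  (Ps : set (set T -> R)) (A : set T) : R := sup [set P A | P in Ps].
Definition lower_prob d (T : measurableType d) (R : realType)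
  (Ps : set (set T -> R)) (A : set T) : R := inf [set P A | P in Ps].

Definition preserves d (T : measurableType d) (R : realType)
  (theta : T -> T) (mu : set T -> R) : Prop :=
  forall A, measurable A -> mu (theta @^-1` A) = mu A.

Definition invariant_set (T : Type) (theta : T -> T) (B : set T) : Prop :=
  theta @^-1` B = B.

Definition ergodic d (T : measurableType d) (R : realType)
  (theta : T -> T) (mu : set T -> R) : Prop :=
  preserves theta mu /\
  forall B, measurable B -> invariant_set theta B ->
    (mu B = 0 \/ mu B = 1) /\ (mu B = 0 \/ mu (~` B) = 0).

(* Main.v *)
Require Import Defs.
From HB Require Import structures.
From mathcomp Require Import all_boot all_order all_algebra.
From mathcomp Require Import all_classical all_reals all_analysis.
Import Order.TTheory GRing.Theory Num.Theory.
Local Open Scope classical_set_scope.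
Local Open Scope ring_scope.

Set Implicit Arguments. Unset Strict Implicit.
Section Aux.
Variables (d : measure_display) (T : measurableType d) (R : realType)
  (Ps : set (set T -> R)).
Hypothesis Pne : Ps !=set0.
Hypothesis Pfa : forall P, Ps P -> fa_prob P.

Lemma faC P A : Ps P -> measurable A -> P (~` A) = 1 - P A.
Proof.
move=> /Pfa [h1 [_ h3]] mA.
have := h3 A (~` A) mA (measurableC mA).
rewrite setUCr setICr h1 => /(_ erefl) ->; by rewrite addrAC subrr add0r.
Qed.

Lemma fa_bnd P A : Ps P -> measurable A -> 0 <= P A <= 1.
Proof.
move=> PP mA; have [_ [h2 _]] := Pfa PP.
rewrite h2 //= -subr_ge0 -faC //; exact: h2 (measurableC mA).
Qed.

Lemma hub A : measurable A -> has_ubound [set P A | P in Ps].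
Proof. by move=> mA; exists 1 => _ [P PP <-]; have /andP[] := fa_bnd PP mA. Qed.

Lemma hlb A : measurable A -> has_lbound [set P A | P in Ps].
Proof. by move=> mA; exists 0 => _ [P PP <-]; have /andP[] := fa_bnd PP mA. Qed.

Lemma nei A : [set P A | P in Ps] !=set0.
Proof. by case: Pne => P PP; exists (P A), P. Qed.

Lemma V_ge P A : Ps P -> measurable A -> P A <= upper_prob Ps A.
Proof. by move=> PP mA; apply: ub_le_sup (hub mA) _ _; exists P. Qed.

Lemma v_le P A : Ps P -> measurable A -> lower_prob Ps A <= P A.
Proof. by move=> PP mA; apply: ge_inf (hlb mA) _ _; exists P. Qed.

Lemma V_ge0 A : measurable A -> 0 <= upper_prob Ps A.
Proof.
move=> mA; case: Pne => P PP; apply: le_trans (V_ge PP mA).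
by have /andP[] := fa_bnd PP mA.
Qed.

Lemma v_ge0 A : measurable A -> 0 <= lower_prob Ps A.
Proof.
move=> mA; apply: lb_le_inf (nei A) _ => _ [P PP <-].
by have /andP[] := fa_bnd PP mA.
Qed.

Lemma vV A : measurable A -> lower_prob Ps A <= upper_prob Ps A.
Proof. by move=> mA; case: Pne => P PP; apply: le_trans (v_le PP mA) (V_ge PP mA). Qed.

Lemma vVC A : measurable A -> lower_prob Ps A = 1 - upper_prob Ps (~` A).
Proof.
move=> mA; apply/le_anti/andP; split.
- rewrite lerBrDl -lerBrDr; apply: ge_sup (nei _) _ => _ [P PP <-].
  rewrite faC // lerD2l lerN2; exact: v_le.
- apply: lb_le_inf (nei _) _ => _ [P PP <-].
  rewrite lerBlDr -lerBlDl -faC //; exact: V_ge (measurableC mA).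
Qed.

End Aux.
Unset Implicit Arguments.

Theorem proposition6 (d : measure_display) (T : measurableType d) (R : realType)
  (Ps : set (set T -> R)) (theta : T -> T) :
  Ps !=set0 ->
  (forall P, Ps P -> fa_prob P) ->
  measurable_fun setT theta ->
  preserves theta (upper_prob Ps) ->
  ((ergodic theta (upper_prob Ps) <->
     (forall B, measurable B -> invariant_set theta B ->
        upper_prob Ps B = 0 \/ upper_prob Ps (~` B) = 0)) /\
   (ergodic theta (upper_prob Ps) -> ergodic theta (lower_prob Ps))).
Proof.
move=> Pne Pfa mth pres.
have VC0 B : measurable B -> upper_prob Ps (~` B) = 0 -> upper_prob Ps B = 1.
  move=> mB h; apply/le_anti/andP; split.
    apply: ge_sup (nei Pne _) _ => _ [P PP <-].
    by have /andP[] := fa_bnd Pfa PP mB.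
  case: Pne => P PP; apply: le_trans (V_ge Pfa PP mB).
  have := V_ge Pfa PP (measurableC mB); rewrite h (faC Pfa) // subr_le0 //.
split; first split.
- by case=> _ h B mB iB; case: (h B mB iB).
- move=> h; rewrite /ergodic; split => // B mB iB; case: (h B mB iB) => H; split; auto.
- case=> _ h; rewrite /ergodic; split.
  + move=> A mA.
    have mpA : measurable (theta @^-1` A).
      by rewrite -[_ @^-1` _]setTI; apply: mth.
    by rewrite !(vVC Pne Pfa) // preimage_setC (pres _ (measurableC mA)).
  + move=> B mB iB; case: (h B mB iB) => _ [] H.
    * have H0 : lower_prob Ps B = 0.
        apply/le_anti/andP; split; last exact: (v_ge0 Pne Pfa).
        by rewrite -H (vV Pne Pfa).
      by split; left.
    * have H1 : lower_prob Ps B = 1 by rewrite (vVC Pne Pfa) // H subr0.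
      have H0 : lower_prob Ps (~` B) = 0.
        apply/le_anti/andP; split; last exact: (v_ge0 Pne Pfa) (measurableC mB).
        by rewrite -H (vV Pne Pfa) //; exact: measurableC.
      by split; right.
Qed.
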